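(* Let $X$ be a topological space with topology $\mathcal T_X$. If there exists a base $\mathcal B$ of $X$ such that the family $\{\mathcal P\in[\mathcal B]^{\le\omega}:\mathcal P\subset_!\mathcal B\}$ contains a club, then the family $\{\mathcal P\in[\mathcal T_X]^{\le\omega}:\mathcal P\subset_!\mathcal T_X\}$ contains a club as well (i.e. $X$ is very I-favorable).
   Context: For a family $\mathcal P$ of open subsets of $X$ contained in a family $\mathcal Q$ of open subsets of $X$, write $\mathcal P\subset_!\mathcal Q$ if for every subfamily $\mathcal S\subset\mathcal P$ and every point $x\notin\operatorname{cl}_X\bigcup\mathcal S$ there exists $W\in\mathcal P$ with $x\in W$ and $W\cap\bigcup\mathcal S=\emptyset$. $[\mathcal Q]^{\le\omega}$ denotes the set of all countable subfamilies of $\mathcal Q$. A family $\mathcal C\subset[\mathcal Q]^{\le\omega}$ is a club if (i) for every increasing sequence $C_1\subset C_2\subset\cdots$ of members of $\mathcal C$, $\bigcup_nC_n\in\mathcal C$, and (ii) every $B\in[\mathcal Q]^{\le\omega}$ is contained in some $C\in\mathcal C$. A space $X$ is very I-favorable if $\{\mathcal P\in[\mathcal T_X]^{\le\omega}:\mathcal P\subset_!\mathcal T_X\}$ contains a club. *)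

(* Defs.v *)
From Stdlib Require Import Classical.

Definition set (X : Type) := X -> Prop.
Definition family (X : Type) := set X -> Prop.

Definition is_topology {X : Type} (T : family X) : Prop :=
  T (fun _ => True) /\
  (forall F : family X, (forall U, F U -> T U) ->
      T (fun x => exists U, F U /\ U x)) /\
  (forall U V, T U -> T V -> T (fun x => U x /\ V x)).

Definition cl {X : Type} (T : family X) (A : set X) : set X :=
  fun x => forall U, T U -> U x -> exists y, U y /\ A y.

Definition bigU {X : Type} (S : family X) : set X :=
  fun x => exists U, S U /\ U x.

Definition fsubset {X : Type} (P Q : family X) : Prop :=
  forall U, P U -> Q U.

Definition is_base {X : Type} (T B : family X) : Prop :=
  fsubset B T /\
  forall U x, T U -> U x -> exists V, B V /\ V x /\ (forall y, V y -> U y).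

Definition countable_family {X : Type} (P : family X) : Prop :=
  exists f : set X -> nat, forall A B, P A -> P B -> f A = f B -> A = B.

Definition ctbl_sub {X : Type} (Q : family X) : family X -> Prop :=
  fun P => fsubset P Q /\ countable_family P.

Definition sub_bang {X : Type} (T : family X) (P Q : family X) : Prop :=
  fsubset P Q /\
  forall S : family X, fsubset S P ->
    forall x, ~ cl T (bigU S) x ->
      exists W, P W /\ W x /\ (forall y, W y -> ~ bigU S y).

Definition is_club {X : Type} (Q : family X) (C : family X -> Prop) : Prop :=
  (forall P, C P -> ctbl_sub Q P) /\
  (forall Cs : nat -> family X,
     (forall n, C (Cs n)) -> (forall n, fsubset (Cs n) (Cs (S n))) ->
     C (fun U => exists n, Cs n U)) /\
  (forall B, ctbl_sub Q B -> exists P, C P /\ fsubset B P).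

Definition contains_club {X : Type} (T Q : family X) : Prop :=
  exists C, is_club Q C /\
    (forall P, C P -> ctbl_sub Q P /\ sub_bang T P Q).

Definition very_I_favorable {X : Type} (T : family X) : Prop :=
  contains_club T T.

(* Main.v *)
Require Import Defs.
From Stdlib Require Import Classical ClassicalEpsilon FunctionalExtensionality PropExtensionality Cantor Lia PeanoNat.

Definition cnt {A : Type} (P : A -> Prop) : Prop :=
  exists f : A -> nat, forall a b, P a -> P b -> f a = f b -> a = b.

Lemma cnt_sub {A} (P Q : A -> Prop) : cnt P -> (forall a, Q a -> P a) -> cnt Q.
Proof. intros [f Hf] H. exists f. intros a b Ha Hb. apply Hf; auto. Qed.

Lemma cnt_image {A B'} (P : A -> Prop) (h : A -> B') :
  cnt P -> cnt (fun b => exists a, P a /\ b = h a).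
Proof.
  intros [f Hf].
  set (inv := fun b : B' => epsilon (inhabits (@None A))
     (fun o => match o with Some a => P a /\ b = h a | None => False end)).
  exists (fun b => match inv b with Some a => f a | None => 0 end).
  intros b1 b2 H1 H2 E.
  assert (S1 : match inv b1 with Some a => P a /\ b1 = h a | None => False end).
  { unfold inv. apply epsilon_spec. destruct H1 as [a Ha]. exists (Some a). exact Ha. }
  assert (S2 : match inv b2 with Some a => P a /\ b2 = h a | None => False end).
  { unfold inv. apply epsilon_spec. destruct H2 as [a Ha]. exists (Some a). exact Ha. }
  destruct (inv b1) as [a1|]; [|contradiction].
  destruct (inv b2) as [a2|]; [|contradiction].
  destruct S1 as [Pa1 ->]. destruct S2 as [Pa2 ->].
  f_equal. apply Hf; auto.
Qed.

Lemma cnt_prod {A B'} (P : A -> Prop) (Q : B' -> Prop) :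
  cnt P -> cnt Q -> cnt (fun p : A * B' => P (fst p) /\ Q (snd p)).
Proof.
  intros [f Hf] [g Hg]. exists (fun p => to_nat (f (fst p), g (snd p))).
  intros [a1 b1] [a2 b2] [H1 H1'] [H2 H2'] E; cbn [fst snd] in *.
  apply (f_equal of_nat) in E. rewrite !cancel_of_to in E. injection E as E1 E2.
  f_equal; [apply Hf|apply Hg]; auto.
Qed.

Lemma cnt_Union {A} (Ps : nat -> A -> Prop) :
  (forall n, cnt (Ps n)) -> cnt (fun a => exists n, Ps n a).
Proof.
  intros H.
  set (F := fun n => epsilon (inhabits (fun _ : A => 0))
     (fun f => forall a b, Ps n a -> Ps n b -> f a = f b -> a = b)).
  assert (HF : forall n a b, Ps n a -> Ps n b -> F n a = F n b -> a = b).
  { intro n. unfold F. apply (epsilon_spec (inhabits (fun _ : A => 0))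
     (fun f => forall a b, Ps n a -> Ps n b -> f a = f b -> a = b)). apply H. }
  set (N := fun a => epsilon (inhabits 0) (fun n => Ps n a)).
  assert (HN : forall a, (exists n, Ps n a) -> Ps (N a) a).
  { intros a Ha. unfold N. apply epsilon_spec. exact Ha. }
  exists (fun a => to_nat (N a, F (N a) a)).
  intros a b Ha Hb E.
  apply (f_equal of_nat) in E. rewrite !cancel_of_to in E. injection E as E1 E2.
  rewrite <- E1 in E2. apply (HF (N a)); auto. rewrite E1. apply HN; auto.
Qed.

Lemma cnt_union2 {A} (P Q : A -> Prop) : cnt P -> cnt Q -> cnt (fun a => P a \/ Q a).
Proof.
  intros HP HQ.
  apply cnt_sub with (P := fun a => exists n, (match n with 0 => P | _ => Q end) a).
  - apply cnt_Union. intros [|n]; auto.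
  - intros a [Ha|Ha]; [exists 0|exists 1]; auto.
Qed.

Lemma cl_mono {X} (T : family X) (A A' : set X) x :
  (forall y, A y -> A' y) -> cl T A x -> cl T A' x.
Proof.
  intros H Hc U HU Ux. destruct (Hc U HU Ux) as [y [Uy Ay]]. eauto.
Qed.

Definition PB {X} (B P : family X) : family X := fun U => P U /\ B U.

Definition good {X} (B P : family X) : Prop :=
  forall U W, P U -> P W -> (exists z, U z /\ W z) ->
    exists V, P V /\ B V /\ (exists z, V z) /\ (forall y, V y -> U y /\ W y).


Lemma PB_ext {X} (P Q : family X) : (forall U, P U <-> Q U) -> P = Q.
Proof. intros H. apply functional_extensionality. intro U. apply propositional_extensionality. apply H. Qed.

Theorem proposition2p7 (X : Type) (T : family X) (hT : is_topology T)
  (B : family X) (hB : is_base T B) (hC : contains_club T B) :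
  very_I_favorable T.
Proof.
  destruct hC as [CB [[Hc1 [Hc2 Hc3]] Hc4]].
  destruct hB as [BT Hbase].
  destruct hT as [_ [_ Tint]].
  set (C := fun P : family X => ctbl_sub T P /\ CB (PB B P) /\ good B P).
  exists C. split; [split; [|split]|].
  - intros P HP. apply HP.
  -
    intros Cs HCs Hinc.
    assert (Hmono : forall k n, fsubset (Cs n) (Cs (k + n))).
    { induction k; intros n U HU; simpl; auto. apply Hinc, IHk, HU. }
    assert (Hmono' : forall n m, n <= m -> fsubset (Cs n) (Cs m)).
    { intros n m Hnm. replace m with ((m - n) + n) by lia. apply Hmono. }
    split; [split|split].
    + intros U [n HU]. apply (HCs n), HU.
    + apply (cnt_Union Cs). intro n. apply (HCs n).
    + assert (E : PB B (fun U => exists n, Cs n U) = (fun U => exists n, PB B (Cs n) U)).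
      { apply PB_ext. intro U. unfold PB. split.
        - intros [[n H] HB]. eauto.
        - intros [n [H HB]]. eauto. }
      rewrite E. apply Hc2.
      * intro n. apply (HCs n).
      * intros n U [H1 H2]. split; auto. apply Hinc, H1.
    + intros U W [n HU] [m HW] Hz.
      destruct (HCs (max n m)) as [_ [_ Hg]].
      destruct (Hg U W) as [V [HV1 HV2]]; auto.
      * apply (Hmono' n); [lia|auto].
      * apply (Hmono' m); [lia|auto].
      * exists V. split; eauto.
  -
    intros A HA.
    set (inhF := inhabits (fun _ : X => False)).
    set (wit := fun U W : set X => epsilon inhF
       (fun V => B V /\ (exists z, V z) /\ forall y, V y -> U y /\ W y)).
    set (D := fun P : family X => fun V => PB B P V \/
       (exists U W, P U /\ P W /\ B V /\ V = wit U W)).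
    set (next := fun P : family X => epsilon (inhabits (fun _ : set X => False))
       (fun Q => CB Q /\ fsubset (D P) Q)).
    set (Pseq := fix Pseq (n : nat) : family X :=
       match n with 0 => A | S n => fun U => Pseq n U \/ next (Pseq n) U end).
    assert (Hnext : forall P, ctbl_sub T P -> CB (next P) /\ fsubset (D P) (next P)).
    { intros P HP. unfold next. apply epsilon_spec.
      apply Hc3. split.
      - intros V [[_ HV]|[U [W [_ [_ [HV _]]]]]]; auto.
      - apply cnt_union2.
        + apply cnt_sub with (P := P). apply HP. intros a [Ha _]; auto.
        + apply cnt_sub with (P := fun b => exists a, (fun p : set X * set X => P (fst p) /\ P (snd p)) a /\ b = (fun p => wit (fst p) (snd p)) a).
          * apply cnt_image, cnt_prod; apply HP.
          * intros V [U [W [H1 [H2 [_ ->]]]]]. exists (U, W). simpl. auto. }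
    assert (Hinv : forall n, ctbl_sub T (Pseq n)).
    { induction n.
      - exact HA.
      - destruct (Hnext _ IHn) as [HQ _]. destruct (Hc1 _ HQ) as [HQ1 HQ2].
        split.
        + intros U [H|H]; [apply IHn, H|apply BT, HQ1, H].
        + apply cnt_union2; [apply IHn|exact HQ2]. }
    set (Qn := fun n => next (Pseq n)).
    assert (HQn : forall n, CB (Qn n) /\ fsubset (D (Pseq n)) (Qn n)).
    { intro n. apply Hnext, Hinv. }
    assert (HQB : forall n, fsubset (Qn n) B).
    { intro n. apply (Hc1 _ (proj1 (HQn n))). }
    assert (Hmono : forall k n, fsubset (Pseq n) (Pseq (k + n))).
    { induction k; intros n U HU; simpl; auto. left. apply IHk, HU. }
    assert (Hmono' : forall n m, n <= m -> fsubset (Pseq n) (Pseq m)).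
    { intros n m Hnm. replace m with ((m - n) + n) by lia. apply Hmono. }
    exists (fun U => exists n, Pseq n U). split.
    + split; [split|split].
      * intros U [n HU]. apply (Hinv n), HU.
      * apply (cnt_Union Pseq). intro n. apply (Hinv n).
      * assert (E : PB B (fun U => exists n, Pseq n U) = (fun U => exists n, Qn n U)).
        { apply PB_ext. intro U. unfold PB. split.
          - intros [[n H] HB]. exists n. apply (proj2 (HQn n)). left. split; auto.
          - intros [n H]. split; [exists (S n); simpl; right; exact H|apply (HQB n), H]. }
        rewrite E. apply Hc2.
        -- intro n. apply HQn.
        -- intros n U H. apply (proj2 (HQn (S n))). left. split.
           ++ simpl. right. exact H.
           ++ apply (HQB n), H.
      * intros U W [n HU] [m HW] [z [Uz Wz]].
        set (k := max n m).
        assert (HUk : Pseq k U) by (apply (Hmono' n); [lia|auto]).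
        assert (HWk : Pseq k W) by (apply (Hmono' m); [lia|auto]).
        assert (Hw : B (wit U W) /\ (exists z, wit U W z) /\ forall y, wit U W y -> U y /\ W y).
        { unfold wit. apply epsilon_spec.
          assert (TU : T U) by (apply (Hinv n), HU).
          assert (TW : T W) by (apply (Hinv m), HW).
          destruct (Hbase (fun x => U x /\ W x) z (Tint U W TU TW) (conj Uz Wz)) as [V [BV [Vz HV]]].
          exists V. eauto. }
        exists (wit U W). split; [|exact Hw].
        exists (S k). simpl. right. apply (proj2 (HQn k)). right.
        exists U, W. split; [|split; [|split]]; auto. apply Hw.
    + intros U HU. exists 0. exact HU.
  -
    intros P [HP1 [HP2 HP3]]. split; [exact HP1|]. split; [apply HP1|].
    intros S HS x Hx.
    set (S' := fun V => PB B P V /\ exists U, S U /\ forall y, V y -> U y).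
    destruct (Hc4 _ HP2) as [_ [_ Hbang]].
    assert (HS' : fsubset S' (PB B P)) by (intros V [HV _]; exact HV).
    assert (Hcl' : ~ cl T (bigU S') x).
    { intro Hcl. apply Hx. apply (cl_mono _ (bigU S')); auto.
      intros y [V [[_ [U [SU VU]]] Vy]]. exists U. auto. }
    destruct (Hbang S' HS' x Hcl') as [W [[PW BW] [Wx HW]]].
    exists W. split; [exact PW|split; [exact Wx|]].
    intros y Wy [U [SU Uy]].
    destruct (HP3 U W) as [V [PV [BV [[z Vz] HV]]]]; auto.
    { eauto. }
    apply (HW z). { apply HV, Vz. }
    exists V. split; auto. split; [split; auto|]. exists U. split; auto.
    intros y' Vy'. apply HV, Vy'.
Qed.
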